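(* Let $\mathcal Q=(\mathcal G,\mathcal C)$ be a CWS code in standard form with $K=|\mathcal C|>1$, and suppose the $j$-th bit is involved in $\mathcal C$. Then the graph-stabilizer generator $S_j=X_jZ^{\mathbf r_j}$ is not detectable by $\mathcal Q$. Consequently the distance of $\mathcal Q$ is at most $\mathrm{wgt}(S_j)=1+\deg_{\mathcal G}(j)$.
   Context: A Pauli operator on $n$ qubits is, up to a phase, $X^{\mathbf v}Z^{\mathbf u}=X_1^{v_1}\cdots X_n^{v_n}Z_1^{u_1}\cdots Z_n^{u_n}$ with $\mathbf v,\mathbf u\in\{0,1\}^n$; its weight is the number of qubits on which it acts as a non-identity operator. For a subspace $\mathcal Q\subseteq(\mathbb C^2)^{\otimes n}$ with orthonormal basis $\{|i\rangle\}$, a Pauli operator $E$ is detectable if $\langle j|E|i\rangle=C_E\delta_{ij}$ for all $i,j$, with $C_E$ independent of $i,j$; the distance of $\mathcal Q$ is the smallest weight of a non-detectable Pauli operator. Let $\mathcal G$ be a simple graph on vertex set $\{1,\dots,n\}$ with adjacency matrix $R\in\{0,1\}^{n\times n}$ (symmetric, zero diagonal) and rows $\mathbf r_i$. The graph-stabilizer generators are $S_i=X_iZ^{\mathbf r_i}$, $i=1,\dots,n$; they commute, generate an abelian group $\mathscr S_{\mathcal G}$, and stabilize a unique (up to phase) state $|s\rangle$, the graph state. For a binary code $\mathcal C\subseteq\{0,1\}^n$ with $K$ words, the CWS code in standard form is $\mathcal Q=(\mathcal G,\mathcal C)=\operatorname{span}\{Z^{\mathbf c}|s\rangle:\mathbf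 c\in\mathcal C\}$; it has dimension $K$. The $j$-th bit is involved in $\mathcal C$ if there exist $\mathbf c_1,\mathbf c_2\in\mathcal C$ whose $j$-th coordinates differ. *)

(* Defs.v *)
From HB Require Import structures.
From mathcomp Require Import all_boot all_order all_algebra all_field.
Set Implicit Arguments. Unset Strict Implicit. Unset Printing Implicit Defensive.
Import GRing.Theory Num.Theory.
Local Open Scope ring_scope.

Definition bits (n : nat) := {ffun 'I_n -> bool}.

(* a vector of (C^2)^{(x)n}, given by its coordinates in the computational basis |x> *)
Definition state (n : nat) := bits n -> algC.

Definition zerov (n : nat) : bits n := [ffun _ => false].
Definition xorv (n : nat) (x v : bits n) : bits n := [ffun i => x i (+) v i].
Definition unitvec (n : nat) (j : 'I_n) : bits n := [ffun i => i == j].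
(* u . x over GF(2), as a natural number (only its parity matters) *)
Definition dotb (n : nat) (u x : bits n) : nat := #|[set i | u i && x i]|.

(* The Pauli operator X^v Z^u (Z^u applied first, then X^v):
   Z^u |x> = (-1)^{u.x} |x>,  X^v |x> = |x + v>. *)
Definition pauli (n : nat) (v u : bits n) (psi : state n) : state n :=
  fun x => (-1) ^+ dotb u (xorv x v) * psi (xorv x v).

Definition weight (n : nat) (v u : bits n) : nat := #|[set i | v i || u i]|.

Definition inner (n : nat) (a b : state n) : algC :=
  \sum_(x : bits n) (a x)^* * b x.

Definition simple_graph (n : nat) (R : 'I_n -> 'I_n -> bool) : Prop :=
  (forall i k, R i k = R k i) /\ (forall i, R i i = false).

Definition adj_row (n : nat) (R : 'I_n -> 'I_n -> bool) (i : 'I_n) : bits n :=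
  [ffun k => R i k].

Definition degree (n : nat) (R : 'I_n -> 'I_n -> bool) (j : 'I_n) : nat :=
  #|[set k | R j k]|.

(* s is (a normalized representative of) the graph state of R:
   stabilized by every S_i = X_i Z^{r_i}. *)
Definition is_graph_state (n : nat) (R : 'I_n -> 'I_n -> bool) (s : state n) : Prop :=
  inner s s = 1 /\
  forall (i : 'I_n) (x : bits n), pauli (unitvec i) (adj_row R i) s x = s x.

(* basis vector Z^c |s> of the CWS code (G, C) *)
Definition cws_basis (n : nat) (s : state n) (c : bits n) : state n :=
  pauli (zerov n) c s.

(* X^v Z^u is detectable by Q = span{Z^c|s> : c in C}:
   <c'|E|c> = C_E delta_{c c'} for all basis vectors. *)
Definition detectable (n : nat) (s : state n) (C : {set bits n}) (v u : bits n) : Prop :=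
  exists CE : algC, forall c c' : bits n, c \in C -> c' \in C ->
    inner (cws_basis s c') (pauli v u (cws_basis s c)) = (if c == c' then CE else 0).

Definition is_distance (n : nat) (s : state n) (C : {set bits n}) (d : nat) : Prop :=
  (exists v u : bits n, weight v u = d /\ ~ detectable s C v u) /\
  (forall v u : bits n, (weight v u < d)%N -> detectable s C v u).

Definition involved (n : nat) (C : {set bits n}) (j : 'I_n) : Prop :=
  exists c1 c2 : bits n, c1 \in C /\ c2 \in C /\ c1 j != c2 j.

(* Main.v *)
Require Import Defs.
From HB Require Import structures.
From mathcomp Require Import all_boot all_order all_algebra all_field.
From mathcomp Require Import ring.
Import GRing.Theory Num.Theory.
Local Open Scope ring_scope.

Lemma sgn_dotb (n : nat) (u x : bits n) :
  (-1) ^+ dotb u x = \prod_i ((-1) ^+ (u i && x i) : algC).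
Proof.
rewrite /dotb -prodr_const [RHS](bigID (fun i => u i && x i)) /=.
rewrite [X in _ = _ * X]big1 ?mulr1; last by move=> i /negbTE ->.
apply: eq_big => [i|i]; first by rewrite inE.
by rewrite inE => ->.
Qed.

Lemma sgn_dotb_xor (n : nat) (u x v : bits n) :
  (-1) ^+ dotb u (xorv x v) = ((-1) ^+ dotb u x * (-1) ^+ dotb u v : algC).
Proof.
rewrite !sgn_dotb -big_split /=; apply: eq_bigr => i _.
rewrite /xorv ffunE -signr_addb; congr (_ ^+ _).
by case: (u i); case: (x i); case: (v i).
Qed.

Lemma sgn_dotb_unit (n : nat) (u : bits n) (j : 'I_n) :
  (-1) ^+ dotb u (unitvec j) = ((-1) ^+ u j : algC).
Proof.
rewrite sgn_dotb (bigD1 j) //= big1 ?mulr1; first by rewrite /unitvec ffunE eqxx andbT.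
by move=> i /negbTE Hi; rewrite /unitvec ffunE Hi andbF.
Qed.

Lemma sgn_sq (k : nat) : ((-1) ^+ k * (-1) ^+ k : algC) = 1.
Proof. by rewrite -exprD addnn -signr_odd odd_double. Qed.

Lemma sgn_conj (k : nat) : (((-1) ^+ k : algC)^* = (-1) ^+ k).
Proof. by rewrite rmorphXn rmorphN1. Qed.

Lemma xorv0 (n : nat) (x : bits n) : xorv x (zerov n) = x.
Proof. by apply/ffunP => i; rewrite /xorv /zerov !ffunE addbF. Qed.

Theorem lemma3 (n : nat) (R : 'I_n -> 'I_n -> bool) (s : state n)
    (C : {set bits n}) (j : 'I_n) :
  simple_graph R ->
  is_graph_state R s ->
  (1 < #|C|)%N ->
  involved C j ->
  ~ detectable s C (unitvec j) (adj_row R j) /\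
  weight (unitvec j) (adj_row R j) = (1 + degree R j)%N /\
  (forall d : nat, is_distance s C d -> (d <= 1 + degree R j)%N).
Proof.
move=> [Rsym Rirr] [Hss Hstab] _ [c1 [c2 [Hc1 [Hc2 Hne]]]].
have key : forall c, inner (cws_basis s c) (pauli (unitvec j) (adj_row R j) (cws_basis s c))
                    = (-1) ^+ c j.
  move=> c; transitivity ((-1) ^+ c j * inner s s); last by rewrite Hss mulr1.
  rewrite /inner mulr_sumr; apply: eq_bigr => x _.
  rewrite /cws_basis /pauli !xorv0.
  have := Hstab j x; rewrite /pauli => <-.
  rewrite !sgn_dotb_xor !sgn_dotb_unit !rmorphM /= !sgn_conj.
  set a := (-1) ^+ dotb c x; set e := (-1) ^+ c j.
  have aa : a * a = 1 by apply: sgn_sq.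
  transitivity (e * (a * a) * ((((-1) ^+ dotb (adj_row R j) x * (-1) ^+ adj_row R j j)
     * (s (xorv x (unitvec j)))^*) * ((-1) ^+ dotb (adj_row R j) x * (-1) ^+ adj_row R j j * s (xorv x (unitvec j))))).
    ring.
  by rewrite aa mulr1.
have Hnd : ~ detectable s C (unitvec j) (adj_row R j).
  move=> [CE HCE].
  have h1 := HCE c1 c1 Hc1 Hc1; have h2 := HCE c2 c2 Hc2 Hc2.
  rewrite eqxx key in h1; rewrite eqxx key in h2.
  move: Hne; rewrite -h1 in h2.
  case: (c1 j) h2; case: (c2 j) => //= h; exfalso.
    by move: h; rewrite expr1 expr0 => /eqP; rewrite -subr_eq0 opprK -(natrD _ 1 1) pnatr_eq0.
  by move: h; rewrite expr1 expr0 => /eqP; rewrite -subr_eq0 -opprD -(natrD _ 1 1) oppr_eq0 pnatr_eq0.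
have Hw : weight (unitvec j) (adj_row R j) = (1 + degree R j)%N.
  rewrite /weight /degree.
  have -> : [set i | unitvec j i || adj_row R j i] = j |: [set k | R j k].
    by apply/setP => i; rewrite !inE /unitvec /adj_row !ffunE.
  by rewrite cardsU1 inE Rirr.
split=> //; split=> // d [_ Hd].
rewrite leqNgt; apply/negP => Hlt; apply: Hnd; apply: Hd; by rewrite Hw.
Qed.
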